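(* Fix $i\in[n]$, arbitrary bid profiles $\mathbf{b}_{-i}^{(1)},\dots,\mathbf{b}_{-i}^{(T)}\in B^{n-1}$, and auction formats $\mathcal{M}^{(1)},\dots,\mathcal{M}^{(T)}$ all satisfying allocation monotonicity. Then \[ \max_{s\in\mathcal{S}}\sum_{t\in[T]}u_i^{(t)}(s)=\max_{s\in\mathcal{S}^\dagger}\sum_{t\in[T]}u_i^{(t)}(s). \] Consequently, for any strategies $s_i^{(1)},\dots,s_i^{(T)}\in\mathcal{S}$, $\mathrm{Reg}_i^\dagger=\mathrm{Reg}_i$, where $\mathrm{Reg}_i:=\max_{s\in\mathcal{S}}\sum_t(u_i^{(t)}(s)-u_i^{(t)}(s_i^{(t)}))$ and $\mathrm{Reg}_i^\dagger:=\max_{s\in\mathcal{S}^\dagger}\sum_t(u_i^{(t)}(s)-u_i^{(t)}(s_i^{(t)}))$.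
   Context: Bidder $i$'s value $v_i\in[0,1]$ is drawn from a continuous distribution $\mathcal{D}_i$ on $[0,1]$. The bid set is $B:=\{j/K: j=0,\dots,K\}$. $\mathcal{S}$ is the set of all (measurable) functions $s:[0,1]\to B$ and $\mathcal{S}^\dagger\subseteq\mathcal{S}$ the monotone ones ($v\le v'\Rightarrow s(v)\le s(v')$). An auction format is $\mathcal{M}^{(t)}=(\mathbf{x}^{(t)},\mathbf{p}^{(t)})$ with $\mathbf{x}^{(t)}:B^n\to\Delta([n])$ (nonnegative entries summing to at most 1) and $\mathbf{p}^{(t)}:B^n\to[0,1]^n$. Allocation monotonicity: for all $i$, $\mathbf{b}_{-i}\in B^{n-1}$ and $b_i\le b_i'$ in $B$, $x_i^{(t)}(b_i,\mathbf{b}_{-i})\le x_i^{(t)}(b_i',\mathbf{b}_{-i})$. Utility: $u_i^{(t)}(s):=\mathbb{E}_{v_i\sim\mathcal{D}_i}[x_i^{(t)}(s(v_i),\mathbf{b}_{-i}^{(t)})v_i-p_i^{(t)}(s(v_i),\mathbf{b}_{-i}^{(t)})]$. *)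

(* Defs.v *)
From HB Require Import structures.
From mathcomp Require Import all_boot all_order all_algebra.
From mathcomp Require Import all_classical all_reals all_analysis.
Set Implicit Arguments. Unset Strict Implicit. Unset Printing Implicit Defensive.
Import Order.TTheory GRing.Theory Num.Theory.
Local Open Scope classical_set_scope.
Local Open Scope ring_scope.

(* The bid set B = {j/K : j = 0..K} is represented by indices j : 'I_K.+1;
   the actual bid value is bidval K j = j/K.  Since K > 0 the order on
   indices coincides with the order on bid values. *)
Definition bidval (R : realType) (K : nat) (j : 'I_K.+1) : R := j%:R / K%:R.

Definition profile (n K : nat) := 'I_n -> 'I_K.+1.

Definition upd (n K : nat) (b : profile n K) (i : 'I_n) (bi : 'I_K.+1) :
  profile n K := fun j => if j == i then bi else b j.

(* An auction format M = (x, p), x : B^n -> Delta([n]), p : B^n -> [0,1]^n. *)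
Record auction (R : realType) (n K : nat) := Auction {
  alloc : profile n K -> 'I_n -> R;
  pay   : profile n K -> 'I_n -> R }.

Definition valid_auction (R : realType) (n K : nat) (M : auction R n K) : Prop :=
  (forall b j, 0 <= alloc M b j) /\
  (forall b, \sum_(j < n) alloc M b j <= 1) /\
  (forall b j, 0 <= pay M b j <= 1).

Definition alloc_monotone (R : realType) (n K : nat) (M : auction R n K) : Prop :=
  forall (i : 'I_n) (b : profile n K) (bi bi' : 'I_K.+1),
    (bi <= bi')%N -> alloc M (upd b i bi) i <= alloc M (upd b i bi') i.

(* Strategies s : [0,1] -> B (values of s outside [0,1] are irrelevant).
   S : measurable functions (preimage of each bid is a Borel subset of [0,1]). *)
Definition strategy (R : realType) (K : nat) := R -> 'I_K.+1.

Definition is_strategy (R : realType) (K : nat) (s : strategy R K) : Prop :=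
  forall j : 'I_K.+1, measurable (`[0%R, 1%R]%classic `&` s @^-1` [set j]).

Definition is_monotone_strategy (R : realType) (K : nat) (s : strategy R K) : Prop :=
  is_strategy s /\
  forall v v' : R, v \in `[0, 1] -> v' \in `[0, 1] -> v <= v' -> (s v <= s v')%N.

Definition continuous_dist01 (R : realType) (P : probability R R) : Prop :=
  P `[0%R, 1%R]%classic = 1%E /\ forall x : R, P [set x] = 0%E.

Definition utility (R : realType) (n K : nat) (P : probability R R)
  (M : auction R n K) (i : 'I_n) (b : profile n K) (s : strategy R K) : R :=
  Rintegral P `[0%R, 1%R]%classic
    (fun v => alloc M (upd b i (s v)) i * v - pay M (upd b i (s v)) i).

Definition is_max (T : Type) (R : realType) (A : T -> Prop) (f : T -> R) (m : R) : Prop :=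
  (exists2 s, A s & f s = m) /\ (forall s, A s -> f s <= m).

(* Main.v *)
Require Import Defs.
From HB Require Import structures.
From mathcomp Require Import all_boot all_order all_algebra.
From mathcomp Require Import all_classical all_reals all_analysis.
From mathcomp Require Import measurable_realfun lra.
Import Order.TTheory GRing.Theory Num.Theory.
Local Open Scope classical_set_scope.
Local Open Scope ring_scope.

Lemma int_bounded (R : realType) (P : probability R R) (D : set R) (f : R -> R) (M : R) :
  measurable D -> measurable_fun D f -> (forall x, D x -> `|f x| <= M) ->
  P.-integrable D (EFin \o f).
Proof.
move=> mD mf fM; apply/integrableP; split; first exact/measurable_EFinP.
apply: le_lt_trans.
  apply: (integral_le_bound (`|M|)%:E) => //.
  - exact/measurable_EFinP.
  by apply: aeW => z Dz; rewrite /= lee_fin (le_trans (fM z Dz)) // ler_norm.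
apply: lte_mul_pinfty => //.
exact: (le_lt_trans (probability_le1 P mD) (ltey _)).
Qed.

Lemma meas_comp (R : realType) (K : nat) (s : strategy R K) (a : 'I_K.+1 -> R) :
  is_strategy s -> measurable_fun (`[0%R, 1%R]%classic : set R) (fun v => a (s v)).
Proof.
move=> hs mD Y mY.
rewrite (_ : _ `&` _ = \bigcup_(k in [set k | (k < K.+1)%N /\ Y (a (inord k))])
   (`[0%R, 1%R]%classic `&` s @^-1` [set inord k])).
  by apply: bigcup_measurable => k _; exact: hs.
apply/seteqP; split => [v [Dv Yv]|v [k [kK Yk] [Dv sv]]].
  exists (nat_of_ord (s v)); first by split => //; rewrite inord_val.
  by split => //; rewrite /preimage /= inord_val.
by split => //; rewrite /preimage /= sv.
Qed.

Lemma le_sum_term (R : realType) (K : nat) (F : 'I_K.+1 -> R) j :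
  (forall k, 0 <= F k) -> F j <= \sum_k F k.
Proof.
move=> F0; rewrite (bigD1 j) //= lerDl; exact: sumr_ge0.
Qed.

Lemma int_strat (R : realType) (K : nat) (P : probability R R) (s : strategy R K)
  (a c : 'I_K.+1 -> R) : is_strategy s ->
  P.-integrable `[0%R, 1%R]%classic (EFin \o (fun v => a (s v) * v - c (s v))).
Proof.
move=> hs; apply: (@int_bounded _ _ _ _ (\sum_k (`|a k| + `|c k|))).
- exact: measurable_itv.
- have := measurable_funB (measurable_funM (@meas_comp _ _ s a hs) (@measurable_id _ _ (`[0%R, 1%R]%classic : set R))) (@meas_comp _ _ s c hs).
  exact.
move=> v /=; rewrite in_itv /= => /andP[v0 v1].
apply: le_trans (ler_normB _ _) _.
apply: le_trans (@le_sum_term _ _ (fun k => `|a k| + `|c k|) (s v) _); last first.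
  by move=> k; rewrite addr_ge0.
rewrite lerD2r normrM (ger0_norm v0).
by rewrite ler_piMr.
Qed.
Lemma Rint_sum (R : realType) (P : probability R R) (D : set R) (I : Type)
  (s : seq I) (f : I -> R -> R) : measurable D ->
  (forall t, P.-integrable D (EFin \o f t)) ->
  \sum_(t <- s) Rintegral P D (f t) = Rintegral P D (fun v => \sum_(t <- s) f t v)
  /\ P.-integrable D (EFin \o (fun v => \sum_(t <- s) f t v)).
Proof.
move=> mD hf; elim: s => [|t s [IH1 IH2]].
  have -> : (fun v => \sum_(t <- [::]) f t v) = (fun _ => 0).
    by apply/funext => v; rewrite big_nil.
  rewrite big_nil Rintegral_cst // mul0r; split => //.
  apply: (@int_bounded _ _ _ _ 0) => //; try exact: measurable_cst; by move=> x _; rewrite normr0.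
have -> : (fun v => \sum_(t0 <- t :: s) f t0 v) = (fun v => f t v + \sum_(t0 <- s) f t0 v).
  by apply/funext => v; rewrite big_cons.
rewrite big_cons RintegralD // IH1; split => //.
have := integrableD mD (hf t) IH2.
by apply: eq_integrable.
Qed.

Set Implicit Arguments.
Unset Strict Implicit.
Definition Gf (R : realType) (K : nat) (A C : 'I_K.+1 -> R) (j : 'I_K.+1) (v : R) : R :=
  A j * v - C j.
Definition optb (R : realType) (K : nat) (A C : 'I_K.+1 -> R) (v : R) (j : 'I_K.+1) : bool :=
  [forall k, Gf A C k v <= Gf A C j v].
Definition j0f (R : realType) (K : nat) (A C : 'I_K.+1 -> R) (v : R) : 'I_K.+1 :=
  [arg max_(j > ord0) Gf A C j v]%O.
Definition sstar (R : realType) (K : nat) (A C : 'I_K.+1 -> R) (v : R) : 'I_K.+1 :=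
  [arg max_(j > j0f A C v | optb A C v j) (j : nat)].

Lemma opt_j0 (R : realType) (K : nat) (A C : 'I_K.+1 -> R) v : optb A C v (j0f A C v).
Proof.
rewrite /j0f; case: (arg_maxP (fun j => Gf A C j v) (erefl true : xpredT ord0)) => j _ H.
by apply/forallP => k; exact: H.
Qed.

Lemma opt_s (R : realType) (K : nat) (A C : 'I_K.+1 -> R) v : optb A C v (sstar A C v).
Proof.
by rewrite /sstar; case: (arg_maxnP (fun j : 'I_K.+1 => nat_of_ord j) (opt_j0 A C v)).
Qed.

Lemma s_max (R : realType) (K : nat) (A C : 'I_K.+1 -> R) v (k : 'I_K.+1) :
  optb A C v k -> (k <= sstar A C v)%N.
Proof.
by rewrite /sstar; case: (arg_maxnP (fun j : 'I_K.+1 => nat_of_ord j) (opt_j0 A C v)) => j _ H /H.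
Qed.

Lemma s_strict (R : realType) (K : nat) (A C : 'I_K.+1 -> R) v (k : 'I_K.+1) :
  (sstar A C v < k)%N -> Gf A C k v < Gf A C (sstar A C v) v.
Proof.
move=> lt; rewrite ltNge; apply/negP => le.
have : optb A C v k.
  apply/forallP => k'; apply: le_trans le.
  by move/forallP: (opt_s A C v); apply.
by move/s_max; rewrite leqNgt lt.
Qed.

Lemma s_mono (R : realType) (K : nat) (A C : 'I_K.+1 -> R)
  (hA : forall j j' : 'I_K.+1, (j <= j')%N -> A j <= A j') v v' :
  v <= v' -> (sstar A C v <= sstar A C v')%N.
Proof.
move=> vv; rewrite leqNgt; apply/negP => lt.
have h1 := s_strict lt.
have h2 : Gf A C (sstar A C v') v <= Gf A C (sstar A C v) v.
  by move/forallP: (opt_s A C v); apply.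
have h3 := hA _ _ (ltnW lt).
have h4 : (A (sstar A C v) - A (sstar A C v')) * v <= (A (sstar A C v) - A (sstar A C v')) * v'.
  by apply: ler_wpM2l => //; rewrite subr_ge0.
move: h1 h2 h4; rewrite /Gf; lra.
Qed.

Lemma s_pre (R : realType) (K : nat) (A C : 'I_K.+1 -> R) (j : 'I_K.+1) :
  sstar A C @^-1` [set j] =
  \bigcap_(k in [set k | (k < K.+1)%N])
     [set v | if (j < k)%N then Gf A C (inord k) v < Gf A C j v
              else Gf A C (inord k) v <= Gf A C j v].
Proof.
apply/seteqP; split=> v /=.
  move=> <- k /= kK.
  case: ifP => [lt|_]; first by apply: s_strict; rewrite inordK.
  by move/forallP: (opt_s A C v); apply.
move=> H.
have oj : optb A C v j.
  apply/forallP => k; have := H k (ltn_ord k); rewrite inord_val.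
  by move=> /=; case: ifP => _ h //; exact: ltW.
apply: val_inj; apply/eqP; rewrite eqn_leq s_max // andbT leqNgt; apply/negP => lt.
have := H _ (ltn_ord (sstar A C v)); rewrite /= inord_val lt => h.
by move/forallP: (opt_s A C v) => /(_ j); rewrite leNgt h.
Qed.

Theorem mainTheorem3 (R : realType) (n K T : nat) (hK : (0 < K)%N)
  (P : probability R R) (hP : continuous_dist01 P)
  (i : 'I_n) (M : 'I_T -> auction R n K) (b : 'I_T -> profile n K)
  (hMv : forall t, valid_auction (M t)) (hMm : forall t, alloc_monotone (M t)) :
  (exists m : R,
     is_max (@is_strategy R K)
       (fun s => \sum_(t < T) utility P (M t) i (b t) s) m /\
     is_max (@is_monotone_strategy R K)
       (fun s => \sum_(t < T) utility P (M t) i (b t) s) m) /\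
  (forall st : 'I_T -> strategy R K, (forall t, is_strategy (st t)) ->
     exists r : R,
       is_max (@is_strategy R K)
         (fun s => \sum_(t < T) (utility P (M t) i (b t) s
                                 - utility P (M t) i (b t) (st t))) r /\
       is_max (@is_monotone_strategy R K)
         (fun s => \sum_(t < T) (utility P (M t) i (b t) s
                                 - utility P (M t) i (b t) (st t))) r).
Proof.
pose a t j := alloc (M t) (upd (b t) i j) i.
pose c t j := pay (M t) (upd (b t) i j) i.
pose A j := \sum_(t < T) a t j.
pose C j := \sum_(t < T) c t j.
have hA : forall j j' : 'I_K.+1, (j <= j')%N -> A j <= A j'.
  by move=> j j' h; apply: ler_sum => t _; exact: hMm.
pose D := (`[0%R, 1%R]%classic : set R).
have mD : measurable D by exact: measurable_itv.
pose U s := \sum_(t < T) utility P (M t) i (b t) s.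
have Ueq : forall s, is_strategy s ->
    U s = Rintegral P D (fun v => Gf A C (s v) v) /\
    P.-integrable D (EFin \o (fun v => Gf A C (s v) v)).
  move=> s hs.
  have [h1 h2] := @Rint_sum R P D _ (index_enum 'I_T)
     (fun t v => a t (s v) * v - c t (s v)) mD
     (fun t => @int_strat R K P s (a t) (c t) hs).
  have e : (fun v => \sum_(t <- index_enum 'I_T) (a t (s v) * v - c t (s v)))
           = (fun v => Gf A C (s v) v).
    by apply/funext => v; rewrite /Gf sumrB mulr_suml.
  by rewrite -e; split.
have mG : forall k, measurable_fun setT (Gf A C k).
  move=> k; have := measurable_funB (measurable_funM (@measurable_cst _ _ R R setT (A k))
     (@measurable_id _ R setT)) (@measurable_cst _ _ R R setT (C k)).
  exact.
have ss : is_strategy (sstar A C).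
  move=> j; rewrite s_pre; apply: measurableI; first exact: measurable_itv.
  apply: bigcap_measurableType => k _; case: (nat_of_ord j < k)%N.
    rewrite -[X in measurable X]setTI.
    by apply: (measurable_fun_ltr (mG (inord k)) (mG j)).
  rewrite -[X in measurable X]setTI.
  by apply: (measurable_fun_ler (mG (inord k)) (mG j)).
have sm : is_monotone_strategy (sstar A C).
  by split => // v v' _ _; exact: s_mono.
have key : forall s, is_strategy s -> U s <= U (sstar A C).
  move=> s hs; have [e1 i1] := Ueq s hs; have [e2 i2] := Ueq _ ss.
  rewrite e1 e2; apply: le_Rintegral => // v _.
  by move/forallP: (opt_s A C v); apply.
have part1 : exists m : R,
     is_max (@is_strategy R K) U m /\ is_max (@is_monotone_strategy R K) U m.
  exists (U (sstar A C)); split; split.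
  - by exists (sstar A C).
  - exact: key.
  - by exists (sstar A C).
  - by move=> s [hs _]; exact: key.
split; first exact: part1.
move=> st _; have [m [[[s1 h1 e1] H1] [[s2 h2 e2] H2]]] := part1.
exists (m - \sum_(t < T) utility P (M t) i (b t) (st t)); split; split.
- by exists s1 => //; rewrite sumrB; congr (_ - _).
- by move=> s hs; rewrite sumrB lerD2r; exact: H1.
- by exists s2 => //; rewrite sumrB; congr (_ - _).
- by move=> s hs; rewrite sumrB lerD2r; exact: H2.
Qed.
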